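(* Fix $t\ge1$ and suppose (A1), (A3), (A4'), (A5') hold (the latter two for all $s\in[0:t-1]$), and that the maps $\mathsf P_{s;\ell}$ and $x\mapsto\partial_1\mathsf L_{s;k}(x,y)$ are differentiable so that the estimators below are defined. Then there is $c_t=c_t(t)>1$ such that, deterministically, $$\|\hat{\bm\tau}^{[t]}\|_{\mathrm{op}}\vee\|\hat{\bm\rho}^{[t]}\|_{\mathrm{op}}\le(K\Lambda)^{c_t}.$$
   Context: Notation: $[a:b]=\{a,\dots,b\}$, $[n]=[1:n]$; $\|\cdot\|_{\mathrm{op}}$ spectral norm, $\|f\|_{\mathrm{Lip}}$ Lipschitz constant; $\mathrm{diag}(\cdot)$ diagonal matrix. For $M\in\mathbb R^{(t-1)\times(t-1)}$, $\mathfrak O_t(M)\in\mathbb R^{t\times t}$ has $(\mathfrak O_t(M))_{r,s}=M_{r-1,s}$ for $r\in[2:t],s\in[1:t-1]$, other entries $0$; $\mathfrak O_1(\emptyset)=0$. Setting: $m,n\ge1$, $\phi=m/n$; $A\in\mathbb R^{m\times n}$ (any matrix) with rows $A_k^\top$; $\mu_\ast,\mu^{(0)}\in\mathbb R^n$, $\xi\in\mathbb R^m$; measurable $\mathcal F:\mathbb R^2\to\mathbb R$, $Y_k=\mathcal F(\langle A_k,\mu_\ast\rangle,\xi_k)$. Step sizes $\eta_s>0$; $\mathsf L_{s;k}:\mathbb R^2\to\mathbb R$ ($s\ge0$; $\partial_1,\partial_{11}$ derivatives in first argument), $\mathsf P_{s;\ell}:\mathbb R\to\mathbb R$ ($s\ge1$);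 $\partial_1\mathsf L_s(x,y)=(\partial_1\mathsf L_{s;k}(x_k,y_k))_k$, $\mathsf P_s(x)=(\mathsf P_{s;\ell}(x_\ell))_\ell$; $\mu^{(t)}=\mathsf P_t(\mu^{(t-1)}-\eta_{t-1}A^\top\partial_1\mathsf L_{t-1}(A\mu^{(t-1)},Y))$. Conditions ($K,\Lambda\ge2$): (A1) $1/K\le\phi\le K$; (A3) $\max_{s\in[0:t-1]}\eta_s\le\Lambda$; (A4') $\max_\ell\{|\mathsf P_{s+1;\ell}(0)|\vee\|\mathsf P_{s+1;\ell}\|_{\mathrm{Lip}}\}\le\Lambda$; (A5') $\max_k\{|\partial_1\mathsf L_{s;k}(0,\mathcal F(0,\xi_k))|\vee\|(u_1,u_2)\mapsto\partial_1\mathsf L_{s;k}(u_1,\mathcal F(u_2,\xi_k))\|_{\mathrm{Lip}}\}\le\Lambda$. Estimators (gradient descent inference algorithm): $\hat{\bm\rho}^{[0]}=\hat{\bm\rho}^{[0]}_\ell=\emptyset$; for $t\ge1$: $\hat{\bm L}^{[t]}_k=\mathrm{diag}(\{-\eta_{s-1}\partial_{11}\mathsf L_{s-1;k}((A\mu^{(s-1)})_k,Y_k)\}_{s\in[1:t]})$, $\hat{\bm\tau}^{[t]}_k=\phi[I_t-\hat{\bm L}^{[t]}_k\mathfrak O_t(\hat{\bm\rho}^{[t-1]})]^{-1}\hat{\bm L}^{[t]}_k$, $\hat{\bm\tau}^{[t]}=\frac1m\sum_k\hat{\bm\tau}^{[t]}_k$; $\hat{\bm P}^{[t]}_\ell=\mathrm{diag}(\{\mathsf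 P'_{s;\ell}((\mu^{(s-1)}-\eta_{s-1}A^\top\partial_1\mathsf L_{s-1}(A\mu^{(s-1)},Y))_\ell)\}_{s\in[1:t]})$, $\hat{\bm\rho}^{[t]}_\ell=\hat{\bm P}^{[t]}_\ell[I_t+(\hat{\bm\tau}^{[t]}+I_t)\mathfrak O_t(\hat{\bm\rho}^{[t-1]}_\ell)]$, $\hat{\bm\rho}^{[t]}=\frac1n\sum_\ell\hat{\bm\rho}^{[t]}_\ell$. *)

(* Defs.v *)
From HB Require Import structures.
From mathcomp Require Import all_boot all_order all_algebra.
From mathcomp Require Import all_classical all_reals all_analysis.
Set Implicit Arguments. Unset Strict Implicit. Unset Printing Implicit Defensive.
Import Order.TTheory GRing.Theory Num.Theory.
Local Open Scope ring_scope.
Local Open Scope classical_set_scope.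

Section GD.
Variable R : realType.

Definition lip1 (f : R -> R) (C : R) : Prop :=
  forall x y : R, `|f x - f y| <= C * `|x - y|.

Definition lip2 (g : R -> R -> R) (C : R) : Prop :=
  forall u1 u2 v1 v2 : R,
    `|g u1 u2 - g v1 v2| <= C * Num.sqrt ((u1 - v1) ^+ 2 + (u2 - v2) ^+ 2).

Definition vnorm (t : nat) (v : 'cV[R]_t) : R :=
  Num.sqrt (\sum_(i < t) v i 0 ^+ 2).

Definition opnorm (t : nat) (M : 'M[R]_t) : R :=
  sup [set x : R | exists v : 'cV[R]_t, vnorm v <= 1 /\ x = vnorm (M *m v)].

(* The shift operator O_t : for M of size (t-1), O_t(M)_{r,s} = M_{r-1,s}
   (1-based, r in [2:t], s in [1:t-1]), other entries 0. Here t = t'.+1. *)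
Definition Oshift (t' : nat) : 'M[R]_t' -> 'M[R]_t'.+1 :=
  match t' return 'M[R]_t' -> 'M[R]_t'.+1 with
  | 0 => fun _ => 0
  | u.+1 => fun M => \matrix_(r < u.+2, s < u.+2)
      if (0 < r)%N && (s < u.+1)%N then M (inord r.-1) (inord s) else 0
  end.

Definition d1 (Ls : R -> R -> R) (x y : R) : R := derive1 (fun u => Ls u y) x.
Definition d11 (Ls : R -> R -> R) (x y : R) : R :=
  derive1 (fun u => d1 Ls u y) x.

Variables (m n : nat) (A : 'M[R]_(m, n)) (F : R -> R -> R)
  (mustar mu0 : 'I_n -> R) (xi : 'I_m -> R) (eta : nat -> R)
  (L : nat -> 'I_m -> R -> R -> R) (P : nat -> 'I_n -> R -> R).

Definition phi : R := m%:R / n%:R.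

Definition Yv (k : 'I_m) : R := F (\sum_(j < n) A k j * mustar j) (xi k).

Definition Amul (x : 'I_n -> R) (k : 'I_m) : R := \sum_(j < n) A k j * x j.

Definition zpt (s : nat) (x : 'I_n -> R) (l : 'I_n) : R :=
  x l - eta s * \sum_(k < m) A k l * d1 (L s k) (Amul x k) (Yv k).

Fixpoint mu (s : nat) : 'I_n -> R :=
  match s with
  | 0 => mu0
  | s'.+1 => fun l => P s'.+1 l (zpt s' (mu s') l)
  end.

(* \hat L_k^{[t]} = diag(-eta_{s-1} d11 L_{s-1;k}((A mu^{(s-1)})_k, Y_k)), s in [1:t] *)
Definition Lhat (t : nat) (k : 'I_m) : 'M[R]_t :=
  diag_mx (\row_(i < t) (- eta i * d11 (L i k) (Amul (mu i) k) (Yv k))).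

(* \hat P_l^{[t]} = diag(P'_{s;l}(z_{s-1,l})), s in [1:t] *)
Definition Phat (t : nat) (l : 'I_n) : 'M[R]_t :=
  diag_mx (\row_(i < t) derive1 (P i.+1 l) (zpt i (mu i) l)).

Definition tau_of (t' : nat) (rho_prev : 'M[R]_t') : 'M[R]_t'.+1 :=
  m%:R^-1 *: \sum_(k < m)
     (phi *: (invmx (1%:M - Lhat t'.+1 k *m Oshift rho_prev) *m Lhat t'.+1 k)).

(* Returns (hat rho^{[t]}, (hat rho_l^{[t]})_l). *)
Fixpoint rho_all (t : nat) : 'M[R]_t * ('I_n -> 'M[R]_t) :=
  match t with
  | 0 => (0, fun _ => 0)
  | t'.+1 =>
      let rp := rho_all t' in
      let tau := tau_of rp.1 in
      let rl := fun l : 'I_n =>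
        Phat t'.+1 l *m (1%:M + (tau + 1%:M) *m Oshift (rp.2 l)) in
      (n%:R^-1 *: \sum_(l < n) rl l, rl)
  end.

Definition rho_hat (t : nat) : 'M[R]_t := (rho_all t).1.

(* hat tau^{[t]} for t >= 1, written with t = t'.+1 *)
Definition tau_hat (t' : nat) : 'M[R]_t'.+1 := tau_of (rho_hat t').

End GD.

(* Main.v *)
Require Import Defs.
From HB Require Import structures.
From mathcomp Require Import all_boot all_order all_algebra.
From mathcomp Require Import all_classical all_reals all_analysis.
From mathcomp Require Import ring lra zify.
Import Order.TTheory GRing.Theory Num.Theory.
Import numFieldNormedType.Exports.
Set Implicit Arguments. Unset Strict Implicit. Unset Printing Implicit Defensive.
Local Open Scope ring_scope.

Section Mx.
Variable R : realType.

Definition ebnd T (M : 'M[R]_T) (B : R) := forall i j, `|M i j| <= B.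
Definition lowt T (M : 'M[R]_T) := forall i j : 'I_T, (i < j)%N -> M i j = 0.
Definition slowt T (M : 'M[R]_T) := forall i j : 'I_T, (i <= j)%N -> M i j = 0.

Lemma vnorm_ge T (v : 'cV[R]_T) j : `|v j 0| <= vnorm v.
Proof.
rewrite /vnorm -sqrtr_sqr ler_wsqrtr // (bigD1 j) //= lerDl.
by apply: sumr_ge0 => i _; rewrite sqr_ge0.
Qed.

Lemma opnorm_le T (M : 'M[R]_T) (B : R) : 0 <= B -> ebnd M B ->
  opnorm M <= T%:R ^+ 2 * B.
Proof.
move=> B0 HM; rewrite /opnorm; apply: ge_sup.
  exists (vnorm (M *m 0)), 0; split => //.
  by rewrite /vnorm big1 ?sqrtr0 // => i _; rewrite mxE expr0n.
move=> x [v [hv ->]].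
have hw : forall i, `|(M *m v) i 0| <= T%:R * B.
  move=> i; rewrite mxE; apply: le_trans (ler_norm_sum _ _ _) _.
  rewrite -[T in T%:R]card_ord -sum1_card natr_sum mulr_suml.
  apply: ler_sum => j _; rewrite normrM mul1r -[B]mulr1.
  apply: ler_pM => //; exact: le_trans (vnorm_ge v j) hv.
have TB0 : 0 <= T%:R * B by rewrite mulr_ge0.
rewrite /vnorm -[_ * B]ger0_norm; last by rewrite mulr_ge0 ?exprn_ge0.
rewrite -sqrtr_sqr ler_wsqrtr //.
apply: le_trans (_ : \sum_(i < T) (T%:R * B) ^+ 2 <= _).
  apply: ler_sum => i _; rewrite -real_normK ?num_real // [X in _ <= X]expr2.
  rewrite expr2; apply: ler_pM => //.
rewrite sumr_const card_ord.
have H1 : 0 <= T%:R :> R by rewrite ler0n.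
suff : T%:R * (T%:R * B) ^+ 2 <= (T%:R ^+ 2 * B) ^+ 2 by rewrite mulr_natl.
have -> : (T%:R ^+ 2 * B) ^+ 2 = T%:R * (T%:R * (T%:R * B) ^+ 2) :> R by ring.
apply: ler_wpM2l => //.
case: T {M v hv hw HM} TB0 H1 => [|T'] ? ?; first by rewrite !mul0r expr0n.
by rewrite ler_peMl ?sqr_ge0 // ler1n.
Qed.


Lemma Oshift_ebnd t' (M : 'M[R]_t') (B : R) : 0 <= B -> ebnd M B -> ebnd (Oshift M) B.
Proof.
case: t' M => [|u] M B0 HM i j /=; rewrite mxE; first by rewrite normr0.
by case: ifP => _; rewrite ?normr0.
Qed.

Lemma Oshift_slow t' (M : 'M[R]_t') : lowt M -> slowt (Oshift M).
Proof.
case: t' M => [|u] M HM i j /= hij; rewrite mxE //.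
case: ifP => // /andP[i0 ju]; apply: HM.
rewrite !inordK //; last by move: (ltn_ord i); case: (nat_of_ord i).
by case: (nat_of_ord i) i0 hij.
Qed.

Lemma inv_lemma T (N : 'M[R]_T) (b : R) : slowt N -> ebnd N b -> 0 <= b ->
  lowt (invmx (1%:M - N)) /\ ebnd (invmx (1%:M - N)) ((1 + T%:R * b) ^+ T).
Proof.
move=> sN bN b0.
have unitN : (1%:M - N) \in unitmx.
  rewrite unitmxE det_trig; last first.
    apply/is_trig_mxP => i j hij; rewrite !mxE sN ?(ltnW hij) //.
    by rewrite -(inj_eq val_inj) /= ltn_eqF // subr0.
  rewrite big1 ?unitr1 // => i _; rewrite !mxE eqxx sN // subr0 //.
set Y := invmx _.
have HY : Y = 1%:M + N *m Y.
  have := mulmxV unitN; rewrite -/Y mulmxBl mul1mx => /eqP.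
  by rewrite subr_eq addrC => /eqP.
have HYe : forall i j, Y i j = (i == j)%:R + \sum_k N i k * Y k j.
  by move=> i j; rewrite {1}HY !mxE.
set C := 1 + T%:R * b.
have C1 : 1 <= C by rewrite lerDl mulr_ge0.
have key : forall n0 (i : 'I_T), (i < n0)%N ->
    (forall j : 'I_T, (i < j)%N -> Y i j = 0) /\ (forall j, `|Y i j| <= C ^+ i).
  elim=> [|n0 IH] i // hi.
  have Hk : forall k : 'I_T, (k < i)%N -> (forall j : 'I_T, (k < j)%N -> Y k j = 0)
      /\ (forall j, `|Y k j| <= C ^+ k).
    by move=> k hk; apply: IH; rewrite (leq_trans hk) // -ltnS.
  split.
    move=> j hij; rewrite HYe -(inj_eq val_inj) /= (ltn_eqF hij) big1 ?addr0 // => k _.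
    case: (ltnP k i) => hk; last by rewrite sN // mul0r.
    by rewrite (Hk k hk).1 ?mulr0 // (ltn_trans hk).
  move=> j; rewrite HYe.
  case Ei: (nat_of_ord i) => [|i'].
    rewrite big1 ?addr0 ?expr0; first by case: (i == j); rewrite ?normr1 ?normr0.
    by move=> k _; rewrite sN ?mul0r // Ei.
  apply: le_trans (ler_normD _ _) _.
  apply: le_trans (_ : 1 + T%:R * b * C ^+ i' <= _); last first.
    rewrite exprS mulrDl mul1r lerD2r; first exact: exprn_ege1.
  apply: lerD; first by case: (i == j); rewrite ?normr1 ?normr0.
  apply: le_trans (ler_norm_sum _ _ _) _.
  rewrite -[T in T%:R]card_ord -sum1_card natr_sum !mulr_suml.
  apply: ler_sum => k _; rewrite mul1r normrM.
  case: (ltnP k i) => hk; last by rewrite sN // normr0 mul0r mulr_ge0 // exprn_ge0 // (le_trans ler01).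
  apply: ler_pM => //.
  apply: le_trans ((Hk k hk).2 j) _; apply: ler_weXn2l => //.
  by rewrite -ltnS -Ei.
split.
  by move=> i j; apply: (key i.+1 i (ltnSn _)).1.
move=> i j; apply: le_trans ((key i.+1 i (ltnSn _)).2 j) _.
by apply: ler_weXn2l => //; apply: ltnW.
Qed.


Lemma avg_ebnd T q (M : 'I_q -> 'M[R]_T) (B : R) : (0 < q)%N ->
  (forall k, ebnd (M k) B) -> ebnd (q%:R^-1 *: \sum_k M k) B.
Proof.
move=> q0 HM i j; rewrite mxE summxE normrM ger0_norm ?invr_ge0 ?ler0n //.
rewrite ler_pdivrMl ?ltr0n //; apply: le_trans (ler_norm_sum _ _ _) _.
apply: le_trans (_ : \sum_(k < q) B <= _); first by apply: ler_sum => k _; apply: HM.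
by rewrite sumr_const card_ord mulr_natl.
Qed.

Lemma avg_lowt T q (M : 'I_q -> 'M[R]_T) :
  (forall k, lowt (M k)) -> lowt (q%:R^-1 *: \sum_k M k).
Proof.
move=> HM i j hij; rewrite mxE summxE big1 ?mulr0 // => k _; exact: HM.
Qed.

Lemma natr_le_pow (X : R) k : 2 <= X -> k%:R <= X ^+ k.
Proof.
move=> X2; elim: k => [|k IH]; first by rewrite expr0 ler01.
have X1 : 1 <= X ^+ k by apply: exprn_ege1; apply: le_trans X2; rewrite ler1n.
rewrite -natr1 exprS; apply: le_trans (_ : X ^+ k + X ^+ k <= _).
  by apply: lerD.
by rewrite -mulr2n -mulr_natl ler_pM2r ?(lt_le_trans ltr01 X1).
Qed.

Lemma addpow (X : R) a : 2 <= X -> 1 + X ^+ a <= X ^+ a.+1.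
Proof.
move=> X2; have X1 : 1 <= X ^+ a by apply: exprn_ege1; apply: le_trans X2; rewrite ler1n.
apply: le_trans (_ : X ^+ a + X ^+ a <= _); first by rewrite lerD2r.
by rewrite exprS -mulr2n -mulr_natl ler_pM2r ?(lt_le_trans ltr01 X1).
Qed.

Lemma deriv_lip (f : R -> R) (x C : R) :
  derivable f x 1 -> lip1 f C -> `|derive1 f x| <= C.
Proof.
move=> df lf; rewrite derive1E /derive.
have bnd : \forall h \near dnbhs (0:R), `|h^-1 *: ((f \o shift x) (h *: 1) - f x)| <= C.
  apply: filterS (nbhs_dnbhs_neq 0) => h hn0 /=.
  rewrite normrZ normrV ?unitfE // scaler1.
  have := lf (h + x) x; rewrite addrK => H.
  rewrite ler_pdivrMl ?normr_gt0 // mulrC //.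
rewrite ler_norml; apply/andP; split.
  apply: limr_ge => //; apply: filterS bnd => h; rewrite ler_norml => /andP[] //.
apply: limr_le => //; apply: filterS bnd => h; rewrite ler_norml => /andP[] //.
Qed.

End Mx.

Definition etau (t' a : nat) : nat := (a + 3 + t'.+1) * t'.+1 + 3.
Fixpoint ea (t : nat) : nat :=
  match t with 0 => 0 | t'.+1 => t'.+1 + etau t' (ea t') + 3 + ea t' end.

Section Main.
Variables (R : realType) (m n : nat) (K Lam : R) (A : 'M[R]_(m, n)) (F : R -> R -> R)
    (mustar mu0 : 'I_n -> R) (xi : 'I_m -> R) (eta : nat -> R)
    (L : nat -> 'I_m -> R -> R -> R) (P : nat -> 'I_n -> R -> R) (tm : nat).
Hypotheses (Hm : (0 < m)%N) (Hn : (0 < n)%N) (HK : 2 <= K) (HLam : 2 <= Lam)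
  (Heta : forall s, 0 < eta s) (Hphi : phi R m n <= K)
  (Heta2 : forall s, (s <= tm)%N -> eta s <= Lam)
  (HP : forall s (l : 'I_n), (s <= tm)%N -> lip1 (P s.+1 l) Lam)
  (HL : forall s (k : 'I_m), (s <= tm)%N ->
       lip2 (fun u1 u2 => d1 (L s k) u1 (F u2 (xi k))) Lam)
  (HdP : forall s (l : 'I_n) (x : R), (s <= tm)%N -> derivable (P s.+1 l) x 1)
  (HdL : forall s (k : 'I_m) (x y : R), (s <= tm)%N ->
       derivable (fun u => d1 (L s k) u y) x 1).

Let X := K * Lam.
Lemma X2 : 2 <= X.
Proof.
rewrite /X; apply: le_trans HK _; rewrite ler_peMr //; first by apply: le_trans HK.
by apply: le_trans HLam; rewrite ler1n.
Qed.
Lemma X1 : 1 <= X. Proof. by apply: le_trans X2; rewrite ler1n. Qed.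
Lemma X0 : 0 <= X. Proof. exact: le_trans ler01 X1. Qed.
Lemma KX : K <= X.
Proof. rewrite /X ler_peMr //; [by apply: le_trans HK | by apply: le_trans HLam; rewrite ler1n]. Qed.
Lemma LX : Lam <= X.
Proof. rewrite /X ler_peMl //; [by apply: le_trans HLam | by apply: le_trans HK; rewrite ler1n]. Qed.
Lemma Xpow_ge0 a : 0 <= X ^+ a. Proof. exact: exprn_ge0 X0. Qed.
Lemma Xpow_mono a b : (a <= b)%N -> X ^+ a <= X ^+ b.
Proof. by move=> h; apply: ler_weXn2l X1 _ _ h. Qed.

Lemma dL_bnd i k x : (i <= tm)%N ->
  `|- eta i * d11 (L i k) x (Yv A F mustar xi k)| <= X ^+ 2.
Proof.
move=> hi; rewrite normrM normrN (gtr0_norm (Heta i)) expr2.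
have L0 : 0 <= Lam by apply: le_trans HLam.
apply: ler_pM; [exact: ltW|exact: normr_ge0| |].
  exact: le_trans (Heta2 hi) LX.
apply: le_trans LX; apply: deriv_lip; first exact: HdL.
move=> u v; have := HL k hi u (\sum_(j < n) A k j * mustar j) v (\sum_(j < n) A k j * mustar j).
by rewrite subrr expr0n addr0 sqrtr_sqr.
Qed.

Lemma dP_bnd i l x : (i <= tm)%N -> `|derive1 (P i.+1 l) x| <= X.
Proof. move=> hi; apply: le_trans LX; apply: deriv_lip; [exact: HdP|exact: HP]. Qed.

Lemma tau_step t' (rho : 'M[R]_t') a : (t' <= tm)%N -> lowt rho -> ebnd rho (X ^+ a) ->
  lowt (tau_of A F mustar mu0 xi eta L P rho) /\
  ebnd (tau_of A F mustar mu0 xi eta L P rho) (X ^+ etau t' a).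
Proof.
move=> ht lr br.
set T := t'.+1.
have Hk : forall k, lowt (phi R m n *: (invmx (1%:M - Lhat A F mustar mu0 xi eta L P T k *m Oshift rho)
     *m Lhat A F mustar mu0 xi eta L P T k)) /\
   ebnd (phi R m n *: (invmx (1%:M - Lhat A F mustar mu0 xi eta L P T k *m Oshift rho)
     *m Lhat A F mustar mu0 xi eta L P T k)) (X ^+ etau t' a).
  move=> k.
  set N := Lhat _ _ _ _ _ _ _ _ T k *m Oshift rho.
  have sN : slowt N.
    move=> i j hij; rewrite /N /Lhat mul_diag_mx mxE Oshift_slow ?mulr0 //.
  have bN : ebnd N (X ^+ (a + 2)).
    move=> i j; rewrite /N /Lhat mul_diag_mx mxE normrM mxE exprD mulrC.
    apply: ler_pM => //; first exact: Oshift_ebnd (Xpow_ge0 a) br i j.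
    by apply: dL_bnd; rewrite -ltnS (leq_trans (ltn_ord i)).
  have [lY bY] := inv_lemma sN bN (Xpow_ge0 _).
  have C1 : (1 + T%:R * X ^+ (a + 2)) <= X ^+ (a + 3 + T).
    have -> : (a + 3 + T = (a + 2 + T).+1)%N by lia.
    apply: le_trans (addpow _ X2); rewrite lerD2l.
    rewrite [X ^+ (a + 2 + T)]exprD [X in _ <= X]mulrC [X ^+ (a + 2)]exprD.
    by apply: ler_wpM2r; [rewrite mulr_ge0 ?Xpow_ge0 | exact: natr_le_pow X2].
  have phi0 : 0 <= phi R m n by rewrite /phi divr_ge0 ?ler0n.
  split.
    move=> i j hij; rewrite /Lhat mul_mx_diag !mxE lY ?mul0r ?mulr0 //.
  move=> i j; rewrite /Lhat mul_mx_diag !mxE normrM ger0_norm // normrM.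
  rewrite /etau addnC exprS; apply: ler_pM; [done|by rewrite mulr_ge0|exact: le_trans KX|].
  rewrite -addn2 exprD; apply: ler_pM => //.
    apply: le_trans (bY i j) _; rewrite exprM.
    by apply: lerXn2r => //; rewrite nnegrE ?addr_ge0 ?mulr_ge0 ?Xpow_ge0.
  by apply: dL_bnd; rewrite -ltnS (leq_trans (ltn_ord j)).
split; first by apply: avg_lowt => k; apply: (Hk k).1.
by apply: avg_ebnd => // k; apply: (Hk k).2.
Qed.

Lemma delta_bnd T (i j : 'I_T) : `|(i == j)%:R : R| <= 1.
Proof. by case: (i == j); rewrite ?normr1 ?normr0. Qed.

Lemma rl_step t' (tau : 'M[R]_t'.+1) (rl : 'M[R]_t') a b l : (t' <= tm)%N ->
  lowt tau -> ebnd tau (X ^+ b) -> lowt rl -> ebnd rl (X ^+ a) ->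
  lowt (Phat A F mustar mu0 xi eta L P t'.+1 l *m (1%:M + (tau + 1%:M) *m Oshift rl)) /\
  ebnd (Phat A F mustar mu0 xi eta L P t'.+1 l *m (1%:M + (tau + 1%:M) *m Oshift rl))
    (X ^+ (t'.+1 + b + 3 + a)).
Proof.
move=> ht lt bt lr br; set T := t'.+1.
have sO := Oshift_slow lr.
have bO := Oshift_ebnd (Xpow_ge0 a) br.
split.
  move=> i j hij; rewrite /Phat mul_diag_mx !mxE.
  rewrite -(inj_eq val_inj) /= (ltn_eqF hij) add0r big1 ?mulr0 // => k _.
  case: (ltnP i k) => hk.
    by rewrite !mxE lt // -(inj_eq val_inj) /= (ltn_eqF hk) addr0 mul0r.
  by rewrite sO ?mulr0 // (leq_trans hk) // ltnW.
move=> i j; rewrite /Phat mul_diag_mx !mxE normrM.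
have -> : (T + b + 3 + a = (T + b + 1 + a).+1.+1)%N by lia.
rewrite exprS; apply: ler_pM => //.
  by apply: dP_bnd; rewrite -ltnS (leq_trans (ltn_ord i)).
apply: le_trans (ler_normD _ _) _.
apply: le_trans (addpow _ X2); apply: lerD; first exact: delta_bnd.
apply: le_trans (ler_norm_sum _ _ _) _.
apply: le_trans (_ : \sum_(k < T) X ^+ (b + 1 + a) <= _).
  apply: ler_sum => k _; rewrite !mxE normrM exprD; apply: ler_pM => //.
  apply: le_trans (ler_normD _ _) _; rewrite addn1 addrC.
  by apply: le_trans (addpow _ X2); apply: lerD; [exact: delta_bnd|exact: bt].
rewrite sumr_const card_ord -mulr_natl.
have -> : (T + b + 1 + a = T + (b + 1 + a))%N by lia.
rewrite [X ^+ (T + _)]exprD; apply: ler_wpM2r; [exact: Xpow_ge0|exact: natr_le_pow X2].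
Qed.

Lemma rho_ind t : (t <= tm.+1)%N ->
  (forall l, lowt ((rho_all A F mustar mu0 xi eta L P t).2 l) /\
             ebnd ((rho_all A F mustar mu0 xi eta L P t).2 l) (X ^+ ea t)) /\
  lowt (rho_all A F mustar mu0 xi eta L P t).1 /\
  ebnd (rho_all A F mustar mu0 xi eta L P t).1 (X ^+ ea t).
Proof.
elim: t => [|t' IH] ht.
  by split; [move=> l; split; case | split; case].
have ht' : (t' <= tm)%N by [].
have [IH2 [IH1l IH1b]] := IH (ltnW ht).
have [tl tb] := tau_step ht' IH1l IH1b.
have Hl : forall l, lowt ((rho_all A F mustar mu0 xi eta L P t'.+1).2 l) /\
             ebnd ((rho_all A F mustar mu0 xi eta L P t'.+1).2 l) (X ^+ ea t'.+1).
  move=> l; have [l2 b2] := IH2 l.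
  exact: (rl_step l ht' tl tb l2 b2).
split => //; split.
  by apply: avg_lowt => l; apply: (Hl l).1.
by apply: avg_ebnd => // l; apply: (Hl l).2.
Qed.

End Main.


Definition Nt (t' : nat) : nat := 2 * t'.+1 + ea t'.+1 + etau t' (ea t').

Lemma pow_sq_bnd (R : realType) (X : R) T e : 2 <= X -> T%:R ^+ 2 * X ^+ e <= X ^+ (2 * T + e).
Proof.
move=> X2; have X0 : 0 <= X by apply: le_trans X2.
rewrite exprD; apply: ler_wpM2r; first exact: exprn_ge0.
rewrite mulnC exprM; apply: lerXn2r; rewrite ?nnegrE ?ler0n ?exprn_ge0 //.
exact: natr_le_pow.
Qed.

Theorem lemma7p1 (R : realType) (t' : nat) :
  exists c : R, 1 < c /\
  forall (m n : nat) (K Lam : R) (A : 'M[R]_(m, n)) (F : R -> R -> R)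
    (mustar mu0 : 'I_n -> R) (xi : 'I_m -> R) (eta : nat -> R)
    (L : nat -> 'I_m -> R -> R -> R) (P : nat -> 'I_n -> R -> R),
    (0 < m)%N -> (0 < n)%N -> 2 <= K -> 2 <= Lam ->
    (forall s, 0 < eta s) ->
    K^-1 <= phi R m n <= K ->
    (forall s, (s <= t')%N -> eta s <= Lam) ->
    (forall s (l : 'I_n), (s <= t')%N ->
       `|P s.+1 l 0| <= Lam /\ lip1 (P s.+1 l) Lam) ->
    (forall s (k : 'I_m), (s <= t')%N ->
       `|d1 (L s k) 0 (F 0 (xi k))| <= Lam /\
       lip2 (fun u1 u2 => d1 (L s k) u1 (F u2 (xi k))) Lam) ->
    (forall s (l : 'I_n) (x : R), (s <= t')%N -> derivable (P s.+1 l) x 1) ->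
    (forall s (k : 'I_m) (x y : R), (s <= t')%N ->
       derivable (fun u => L s k u y) x 1 /\
       derivable (fun u => d1 (L s k) u y) x 1) ->
    Num.max (opnorm (tau_hat A F mustar mu0 xi eta L P t'))
            (opnorm (rho_hat A F mustar mu0 xi eta L P t'.+1))
      <= powR (K * Lam) c.
Proof.
exists (Nt t').+1%:R; split.
  by rewrite ltr1n /Nt; lia.
move=> m n K Lam A F mustar mu0 xi eta L P Hm Hn HK HLam Heta /andP[_ Hphi]
  Heta2 HA4 HA5 HdP HdL.
have HP : forall s (l : 'I_n), (s <= t')%N -> lip1 (P s.+1 l) Lam.
  by move=> s l hs; case: (HA4 s l hs).
have HL : forall s (k : 'I_m), (s <= t')%N ->
    lip2 (fun u1 u2 => d1 (L s k) u1 (F u2 (xi k))) Lam.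
  by move=> s k hs; case: (HA5 s k hs).
have HdL' : forall s (k : 'I_m) (x y : R), (s <= t')%N ->
    derivable (fun u => d1 (L s k) u y) x 1.
  by move=> s k x y hs; case: (HdL s k x y hs).
have X2 : 2 <= K * Lam by nra.
have X0 : 0 <= K * Lam by nra.
rewrite powR_mulrn //.
have [_ [l1 b1]] := rho_ind A mustar mu0 Hm Hn HK HLam Heta Hphi Heta2 HP HL HdP HdL' (leqnn t'.+1).
have [_ [l0 b0]] := rho_ind A mustar mu0 Hm Hn HK HLam Heta Hphi Heta2 HP HL HdP HdL' (leqnSn t').
have [_ bt] := tau_step A mustar mu0 P Hm Hn HK HLam Heta Hphi Heta2 HL HdL' (leqnn t') l0 b0.
rewrite ge_max; apply/andP; split.
  apply: le_trans (opnorm_le (exprn_ge0 _ X0) bt) _.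
  apply: le_trans (pow_sq_bnd _ _ X2) _; apply: ler_weXn2l; [nra | rewrite /Nt; lia].
apply: le_trans (opnorm_le (exprn_ge0 _ X0) b1) _.
apply: le_trans (pow_sq_bnd _ _ X2) _; apply: ler_weXn2l; [nra | rewrite /Nt; lia].
Qed.
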